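(* Let $N\ge1$, $k,m\in\mathbb{Z}$, and let $\varphi:\mathbb{H}\times\mathbb{C}\to\mathbb{C}$ transform like a Jacobi form of weight $k$ and index $m$ with respect to $\Gamma\ltimes\mathbb{Z}^2$ for a subgroup $\Gamma\subseteq\mathrm{SL}(2,\mathbb{Z})$. Define $\varphi_1(\tau,z)=\varphi(N\tau,z)$ when $\Gamma\in\{\Gamma^0(N),\Gamma^1(N)\}$, and $\varphi_2(\tau,z)=N^{-k/2}\tau^{-k}\mathbf{e}(-mz^2/(N\tau))\varphi(-\frac1{N\tau},\frac z{N\tau})$ when $\Gamma\in\{\Gamma_0(N),\Gamma_1(N)\}$. Then $\varphi_1|_{k,\frac mN}\gamma=\varphi_1$ for all $\gamma\in\Gamma_0(N)$ if $\Gamma=\Gamma^0(N)$ and for all $\gamma\in\Gamma_1(N)$ if $\Gamma=\Gamma^1(N)$; $\varphi_2|_{k,\frac mN}\gamma=\varphi_2$ for all $\gamma\in\Gamma$ (for $\Gamma\in\{\Gamma_0(N),\Gamma_1(N)\}$); and $\varphi_i|_{\frac mN}X=\varphi_i$ for all $X\in N\mathbb{Z}\times\mathbb{Z}$ ($i=1,2$, whenever defined).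
   Context: $\mathbf{e}(t)=e^{2\pi it}$. For $\gamma=\begin{pmatrix}a&b\\c&d\end{pmatrix}$ and real index $\mu_0$: $(\varphi|_{k,\mu_0}\gamma)(\tau,z)=(c\tau+d)^{-k}\mathbf{e}(-\mu_0\frac{cz^2}{c\tau+d})\varphi(\frac{a\tau+b}{c\tau+d},\frac z{c\tau+d})$; for $X=(\lambda,\mu)$: $(\varphi|_{\mu_0}X)(\tau,z)=\mathbf{e}(\mu_0(\lambda^2\tau+2\lambda z+\lambda\mu))\varphi(\tau,z+\lambda\tau+\mu)$. ''Transforms like a Jacobi form of weight $k$, index $m$ w.r.t. $\Gamma\ltimes\mathbb{Z}^2$'' means $\varphi|_{k,m}\gamma=\varphi$ for $\gamma\in\Gamma$ and $\varphi|_mX=\varphi$ for $X\in\mathbb{Z}^2$. $\Gamma_0(N)$: $c\equiv0\bmod N$; $\Gamma_1(N)$: $c\equiv0$, $a\equiv d\equiv1\bmod N$; $\Gamma^0(N)$: $b\equiv0\bmod N$; $\Gamma^1(N)$: $b\equiv0$, $a\equiv d\equiv1\bmod N$. *)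

(* Defs.v *)
From HB Require Import structures.
From mathcomp Require Import all_boot all_order all_algebra.
From mathcomp Require Import complex.
From mathcomp Require Import reals sequences exp trigo.
Set Implicit Arguments. Unset Strict Implicit. Unset Printing Implicit Defensive.
Import Order.TTheory GRing.Theory Num.Theory.
Local Open Scope ring_scope.

Section Defs.
Variable R : realType.
Local Notation C := (complex R).

Definition cexp (w : C) : C :=
  Complex (expR (complex.Re w) * cos (complex.Im w)) (expR (complex.Re w) * sin (complex.Im w)).

Definition ee (t : C) : C := cexp (Complex 0 (2 * pi) * t).

Definition RtoC (x : R) : C := Complex x 0.

Definition inH (tau : C) : Prop := 0 < complex.Im tau.

Definition ga (g : 'M[int]_2) : int := g 0 0.
Definition gb (g : 'M[int]_2) : int := g 0 1.
Definition gc (g : 'M[int]_2) : int := g 1 0.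
Definition gd (g : 'M[int]_2) : int := g 1 1.

Definition inSL2Z (g : 'M[int]_2) : Prop := \det g = 1.

Definition Gamma_0 (N : nat) (g : 'M[int]_2) : Prop :=
  inSL2Z g /\ (N%:Z %| gc g)%Z.
Definition Gamma_1 (N : nat) (g : 'M[int]_2) : Prop :=
  inSL2Z g /\ (N%:Z %| gc g)%Z /\ (ga g = 1 %[mod N%:Z])%Z /\ (gd g = 1 %[mod N%:Z])%Z.
Definition Gamma0 (N : nat) (g : 'M[int]_2) : Prop :=
  inSL2Z g /\ (N%:Z %| gb g)%Z.
Definition Gamma1 (N : nat) (g : 'M[int]_2) : Prop :=
  inSL2Z g /\ (N%:Z %| gb g)%Z /\ (ga g = 1 %[mod N%:Z])%Z /\ (gd g = 1 %[mod N%:Z])%Z.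

Definition slash (k : int) (mu0 : R) (g : 'M[int]_2) (phi : C -> C -> C)
  (tau z : C) : C :=
  let a : C := (ga g)%:~R in let b : C := (gb g)%:~R in
  let c : C := (gc g)%:~R in let d : C := (gd g)%:~R in
  (c * tau + d) ^ (- k) * ee (- (RtoC mu0) * (c * z ^+ 2 / (c * tau + d)))
  * phi ((a * tau + b) / (c * tau + d)) (z / (c * tau + d)).

Definition slashX (mu0 : R) (lam mu : int) (phi : C -> C -> C) (tau z : C) : C :=
  let l : C := lam%:~R in let u : C := mu%:~R in
  ee (RtoC mu0 * (l ^+ 2 * tau + 2 * l * z + l * u)) * phi tau (z + l * tau + u).

Definition invariant_slash (k : int) (mu0 : R) (G : 'M[int]_2 -> Prop)
  (phi : C -> C -> C) : Prop :=
  forall g, G g -> forall tau z, inH tau -> slash k mu0 g phi tau z = phi tau z.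

Definition invariant_heis (mu0 : R) (L : int -> int -> Prop) (phi : C -> C -> C) : Prop :=
  forall lam mu, L lam mu -> forall tau z, inH tau -> slashX mu0 lam mu phi tau z = phi tau z.

Definition transforms_like_Jacobi (k m : int) (G : 'M[int]_2 -> Prop)
  (phi : C -> C -> C) : Prop :=
  invariant_slash k m%:~R G phi /\ invariant_heis m%:~R (fun _ _ => True) phi.

Definition phi_1 (N : nat) (phi : C -> C -> C) (tau z : C) : C :=
  phi (N%:R * tau) z.

Definition phi_2 (N : nat) (k m : int) (phi : C -> C -> C) (tau z : C) : C :=
  RtoC (Num.sqrt (N%:R : R) ^ (- k)) * tau ^ (- k)
  * ee (- (m%:~R) * z ^+ 2 / (N%:R * tau))
  * phi (- 1 / (N%:R * tau)) (z / (N%:R * tau)).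

Definition NZxZ (N : nat) (lam mu : int) : Prop := (N%:Z %| lam)%Z.

End Defs.

(* Main.v *)
Require Import Defs.
From HB Require Import structures.
From mathcomp Require Import all_boot all_order all_algebra.
From mathcomp Require Import complex.
From mathcomp Require Import reals sequences exp trigo.
From mathcomp Require Import ring.
Import Order.TTheory GRing.Theory Num.Theory.
Local Open Scope ring_scope.

Lemma det22 (A : 'M[int]_2) : \det A = A 0 0 * A 1 1 - A 0 1 * A 1 0.
Proof.
rewrite (expand_det_row _ 0) !big_ord_recl big_ord0 /cofactor !det_mx11 !mxE /=.
rewrite addr0 expr0 expr1 mul1r.
have -> : lift 0 (@ord0 0) = 1 by apply: val_inj.
have -> : lift 1 (@ord0 0) = 0 by apply: val_inj.
rewrite /bump /=. ring.
Qed.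

Section S.
Variable R : realType.
Local Notation C := (complex R).

Lemma cexpD (x y : C) : cexp (x + y) = cexp x * cexp y.
Proof.
case: x => a b; case: y => c d; rewrite /cexp /= expRD cosD sinD.
apply/eqP; rewrite eq_complex /=; apply/andP; split; apply/eqP; ring.
Qed.

Lemma cexp0 : cexp (0 : C) = 1.
Proof. rewrite /cexp /= expR0 cos0 sin0 mul1r mulr0. by []. Qed.

Lemma eeD (x y : C) : ee (x + y) = ee x * ee y.
Proof. by rewrite /ee mulrDr cexpD. Qed.

Lemma ee0 : ee (0 : C) = 1.
Proof. by rewrite /ee mulr0 cexp0. Qed.

Lemma eeN (x : C) : ee x * ee (- x) = 1.
Proof. by rewrite -eeD subrr ee0. Qed.

Lemma RtoC_int (m : int) : RtoC (m%:~R : R) = (m%:~R : C).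
Proof.
rewrite /RtoC. have -> : Complex (m%:~R : R) 0 = real_complex R (m%:~R : R) by [].
by rewrite rmorph_int.
Qed.

Lemma RtoC_mN (m : int) (N : nat) : RtoC ((m%:~R : R) / N%:R) = (m%:~R : C) / N%:R.
Proof.
rewrite /RtoC. have -> : Complex ((m%:~R : R) / N%:R) 0 = real_complex R ((m%:~R : R) / N%:R) by [].
by rewrite rmorphM /= fmorphV /= rmorph_int rmorph_nat. 
Qed.

Lemma ImMR (r : R) (x : C) : complex.Im (real_complex R r * x) = r * complex.Im x.
Proof. case: x => a b /=. ring. Qed.

Lemma intC (c : int) : (c%:~R : C) = real_complex R (c%:~R).
Proof. by rewrite rmorph_int. Qed.

Lemma natC (n : nat) : (n%:R : C) = real_complex R (n%:R).
Proof. by rewrite rmorph_nat. Qed.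

Lemma Im_lin (p q : int) (x : C) : complex.Im (p%:~R * x + q%:~R) = p%:~R * complex.Im x.
Proof. by rewrite intC (intC q) raddfD /= ImMR addr0. Qed.

Lemma Im_neq0 (x : C) : complex.Im x != 0 -> x != 0.
Proof. by apply: contra => /eqP ->. Qed.

Lemma lin_neq0 (p q : int) (x : C) : inH x -> (p != 0) || (q != 0) -> p%:~R * x + q%:~R != 0.
Proof.
rewrite /inH => hx; have [->|hp] := eqVneq p 0 => /= hq.
  by rewrite mul0r add0r intr_eq0.
by apply: Im_neq0; rewrite Im_lin mulf_neq0 // ?intr_eq0 // gt_eqF.
Qed.

Lemma inH_neq0 (x : C) : inH x -> x != 0.
Proof. by move=> hx; apply: Im_neq0; rewrite gt_eqF. Qed.

Lemma inH_N (N : nat) (x : C) : (1 <= N)%N -> inH x -> inH (N%:R * x).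
Proof.
by move=> hN hx; rewrite /inH natC ImMR mulr_gt0 // ltr0n.
Qed.

Lemma Im_inv (x : C) : complex.Im (x^-1) = - complex.Im x / (complex.Re x ^+ 2 + complex.Im x ^+ 2).
Proof. case: x => a b /=. by rewrite mulNr. Qed.

Lemma inH_S (N : nat) (x : C) : (1 <= N)%N -> inH x -> inH (- 1 / (N%:R * x)).
Proof.
move=> hN hx.
have -> : - 1 / (N%:R * x) = real_complex R (- (N%:R)^-1) * x^-1.
  by rewrite natC rmorphN fmorphV invfM; ring.
rewrite /inH ImMR Im_inv mulNr mulNr mulrN opprK mulr_gt0 ?invr_gt0 ?ltr0n //.
rewrite divr_gt0 //. rewrite ltr_wpDl ?sqr_ge0 // exprn_gt0 //.
Qed.
Definition mk22 (a b c d : int) : 'M[int]_2 :=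
  \matrix_(i < 2, j < 2) if i == 0 then (if j == 0 then a else b) else (if j == 0 then c else d).

Lemma mk22E a b c d : [/\ ga (mk22 a b c d) = a, gb (mk22 a b c d) = b,
  gc (mk22 a b c d) = c & gd (mk22 a b c d) = d].
Proof. by rewrite /ga /gb /gc /gd !mxE. Qed.

Lemma det_mk22 a b c d : \det (mk22 a b c d) = a * d - b * c.
Proof. by rewrite det22 !mxE /=. Qed.

Lemma detE (g : 'M[int]_2) : \det g = ga g * gd g - gb g * gc g.
Proof. by rewrite det22. Qed.

Lemma phi1_core (N : nat) (hN : (1 <= N)%N) (k m : int) (phi : C -> C -> C)
  (g : 'M[int]_2) (tau z : C) : inH tau -> inSL2Z g -> (N%:Z %| gc g)%Z ->
  (forall t w, inH t -> slash k m%:~R (mk22 (ga g) (N%:Z * gb g) (gc g %/ N%:Z)%Z (gd g)) phi t w = phi t w) ->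
  slash k ((m%:~R : R) / N%:R) g (phi_1 N phi) tau z = phi_1 N phi tau z.
Proof.
move=> ht; rewrite /inSL2Z detE => hdet /divzK hc H.
move: (H _ z (inH_N _ _ hN ht)); rewrite /slash /phi_1; case: (mk22E (ga g) (N%:Z * gb g) (gc g %/ N%:Z)%Z (gd g)) => -> -> -> ->.
move: hdet hc; set a := ga g; set b := gb g; set c := gc g; set d := gd g; set c' := (c %/ N%:Z)%Z.
move=> hdet hc <-; rewrite -hc RtoC_int RtoC_mN.
have hN0 : (N%:R : C) != 0 by rewrite pnatr_eq0 -lt0n.
have hD : c'%:~R * (N%:R * tau) + d%:~R != 0 :> C.
  apply: lin_neq0; first exact: inH_N. rewrite -negb_and; apply/negP => /andP[/eqP h1 /eqP h2].
  by move: hdet; rewrite -hc h1 h2 ?mul0r ?mulr0 ?subr0.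
congr (_ * ee _ * phi _ _).
- congr (_ ^ _). rewrite rmorphM /=. ring.
- rewrite !rmorphM /=. field; by rewrite ?hD ?hN0.
- rewrite !rmorphM /=. field; by rewrite ?hD ?hN0.
- rewrite !rmorphM /=. field; by rewrite ?hD ?hN0.
Qed.
Lemma phi1_heis (N : nat) (hN : (1 <= N)%N) (m : int) (phi : C -> C -> C)
  (lam mu : int) (tau z : C) : inH tau -> (N%:Z %| lam)%Z ->
  invariant_heis m%:~R (fun _ _ => True) phi ->
  slashX ((m%:~R : R) / N%:R) lam mu (phi_1 N phi) tau z = phi_1 N phi tau z.
Proof.
move=> ht /divzK hl Hh.
move: (Hh (lam %/ N%:Z)%Z mu I _ z (inH_N _ _ hN ht)); rewrite /slashX /phi_1.
set l := (lam %/ N%:Z)%Z; rewrite -hl RtoC_int RtoC_mN => <-.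
have hN0 : (N%:R : C) != 0 by rewrite pnatr_eq0 -lt0n.
congr (ee _ * phi _ _).
- rewrite !rmorphM /=. field; by rewrite ?hN0.
- rewrite !rmorphM /=. ring.
Qed.
Lemma phi2_heis (N : nat) (hN : (1 <= N)%N) (k m : int) (phi : C -> C -> C)
  (lam mu : int) (tau z : C) : inH tau -> (N%:Z %| lam)%Z ->
  invariant_heis m%:~R (fun _ _ => True) phi ->
  slashX ((m%:~R : R) / N%:R) lam mu (phi_2 N k m phi) tau z = phi_2 N k m phi tau z.
Proof.
move=> ht /divzK hl Hh.
have hN0 : (N%:R : C) != 0 by rewrite pnatr_eq0 -lt0n.
have ht0 := inH_neq0 _ ht.
move: (Hh (- mu) (lam %/ N%:Z)%Z I _ (z / (N%:R * tau)) (inH_S _ _ hN ht)); rewrite /slashX /phi_2.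
set l := (lam %/ N%:Z)%Z; rewrite -hl RtoC_int RtoC_mN.
set w := - 1 / (N%:R * tau); set u := z / (N%:R * tau).
set A := (m%:~R * (_ + _ + _)).
move=> H.
have P : phi w ((z + (l * N%:Z)%:~R * tau + mu%:~R) / (N%:R * tau)) = ee (- A) * phi w u.
  rewrite -H mulrA (mulrC (ee (-A))) eeN mul1r; congr (phi w _).
  rewrite /w /u !rmorphM !rmorphN /=; field; by rewrite ?hN0 ?ht0.
rewrite P.
have E : ee ((m%:~R / N%:R) * ((((l * N%:Z)%:~R) ^+ 2 * tau + 2 * (l * N%:Z)%:~R * z + (l * N%:Z)%:~R * mu%:~R)))
   * ee (- m%:~R * (z + (l * N%:Z)%:~R * tau + mu%:~R) ^+ 2 / (N%:R * tau)) * ee (- A)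
   = ee (- m%:~R * z ^+ 2 / (N%:R * tau)).
  rewrite -!eeD; congr ee. rewrite /A /w /u !rmorphM !rmorphN /=; field; by rewrite ?hN0 ?ht0.
rewrite -E. ring.
Qed.
Lemma expzK (x : C) (k : int) : x != 0 -> x ^ k * x ^ (- k) = 1.
Proof. by move=> hx; rewrite -invr_expz mulrV // unitfE expfz_neq0. Qed.

Lemma powlemma (x y t : C) (k : int) : x != 0 -> y != 0 -> t != 0 ->
  x ^ (- k) * (y / x) ^ (- k) * (y / t) ^ k = t ^ (- k).
Proof.
move=> hx hy ht.
rewrite !exprzMl ?unitfE ?invr_neq0 // !exprz_inv opprK.
transitivity ((x ^ k * x ^ (- k)) * (y ^ k * y ^ (- k)) * t ^ (- k)); first ring.
by rewrite !expzK // !mul1r.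
Qed.
Lemma phi2_core (N : nat) (hN : (1 <= N)%N) (k m : int) (phi : C -> C -> C)
  (g : 'M[int]_2) (tau z : C) : inH tau -> inSL2Z g -> (N%:Z %| gc g)%Z ->
  (forall t w, inH t -> slash k m%:~R
      (mk22 (gd g) (- (gc g %/ N%:Z)%Z) (- (N%:Z * gb g)) (ga g)) phi t w = phi t w) ->
  slash k ((m%:~R : R) / N%:R) g (phi_2 N k m phi) tau z = phi_2 N k m phi tau z.
Proof.
move=> ht; rewrite /inSL2Z detE => hdet /divzK hc H.
have hN0 : (N%:R : C) != 0 by rewrite pnatr_eq0 -lt0n.
have ht0 := inH_neq0 _ ht.
move: (H _ (z / (N%:R * tau)) (inH_S _ _ hN ht)); rewrite /slash /phi_2.
case: (mk22E (gd g) (- (gc g %/ N%:Z)%Z) (- (N%:Z * gb g)) (ga g)) => -> -> -> ->.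
move: hdet hc; set a := ga g; set b := gb g; set c := gc g; set d := gd g; set c' := (c %/ N%:Z)%Z.
move=> hdet hc; rewrite -hc RtoC_int RtoC_mN.
have hCD : (c' * N%:Z)%:~R * tau + d%:~R != 0 :> C.
  apply: lin_neq0 => //; rewrite -negb_and; apply/negP => /andP[/eqP h1 /eqP h2].
  by move: hdet; rewrite -hc h1 h2 ?mul0r ?mulr0 ?subr0.
have hCD' := hCD; rewrite rmorphM /= in hCD'.
have hAB : a%:~R * tau + b%:~R != 0 :> C.
  apply: lin_neq0 => //; rewrite -negb_and; apply/negP => /andP[/eqP h1 /eqP h2].
  by move: hdet; rewrite h1 h2 ?mul0r ?mulr0 ?subr0.
set w := - 1 / (N%:R * tau); set u := z / (N%:R * tau).
set J := (- (N%:Z * b))%:~R * w + a%:~R.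
have JE : J = (a%:~R * tau + b%:~R) / tau.
  rewrite /J /w !rmorphN !rmorphM /=; field; by rewrite ?hN0 ?ht0.
have hJ : J != 0 by rewrite JE mulf_neq0 // invr_neq0.
move=> H0.
set Bx := - (m%:~R) * ((- (N%:Z * b))%:~R * u ^+ 2 / J) in H0.
set tp := (a%:~R * tau + b%:~R) / ((c' * N%:Z)%:~R * tau + d%:~R).
have P : phi (-1 / (N%:R * tp)) (z / ((c' * N%:Z)%:~R * tau + d%:~R) / (N%:R * tp))
   = J ^ k * ee (- Bx) * phi w u.
  apply/esym; rewrite -H0.
  transitivity ((J ^ k * J ^ (- k)) * (ee Bx * ee (- Bx)) *
     phi ((d%:~R * w + (- c')%:~R) / J) (u / J)); first ring.
  rewrite expzK // eeN !mul1r; congr (phi _ _);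
  rewrite JE /tp /w /u ?rmorphN ?rmorphM /=; field; by rewrite hCD' hAB hN0 ht0.
rewrite P.
have Epow : ((c' * N%:Z)%:~R * tau + d%:~R) ^ (- k) * tp ^ (- k) * J ^ k = tau ^ (- k).
  by rewrite JE powlemma.
have Eee : ee (- (m%:~R / N%:R) * ((c' * N%:Z)%:~R * z ^+ 2 / ((c' * N%:Z)%:~R * tau + d%:~R)))
   * ee (- m%:~R * (z / ((c' * N%:Z)%:~R * tau + d%:~R)) ^+ 2 / (N%:R * tp)) * ee (- Bx)
   = ee (- m%:~R * z ^+ 2 / (N%:R * tau)).
  rewrite -!eeD; congr ee.
  rewrite /Bx /tp JE /w /u ?rmorphN ?rmorphM /=.
  have hdC : (a%:~R * d%:~R - b%:~R * (c'%:~R * N%:~R) : C) = 1.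
    rewrite -hc in hdet.
    by have := congr1 (fun x : int => x%:~R : C) hdet; rewrite /= rmorphB !rmorphM /= rmorph1.
  apply/eqP; rewrite -subr_eq0; apply/eqP.
  transitivity (- m%:~R * z ^+ 2 / N%:R / ((c'%:~R * N%:~R * tau + d%:~R) * (a%:~R * tau + b%:~R))
     * (1 - (a%:~R * d%:~R - b%:~R * (c'%:~R * N%:~R)))).
    field; by rewrite hCD' hAB hN0 ht0.
  by rewrite hdC subrr mulr0.
rewrite -Epow -Eee. ring.
Qed.
End S.

Lemma det_aux (a b c d : int) (N : nat) : a * d - b * c = 1 -> (c %/ N%:Z)%Z * N%:Z = c ->
  a * d - (N%:Z * b) * (c %/ N%:Z)%Z = 1.
Proof. move=> h hc; rewrite -h -{2}hc; ring. Qed.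

Lemma det_aux2 (a b c d : int) (N : nat) : a * d - b * c = 1 -> (c %/ N%:Z)%Z * N%:Z = c ->
  d * a - (- (c %/ N%:Z)%Z) * (- (N%:Z * b)) = 1.
Proof. move=> h hc; rewrite -h -{2}hc; ring. Qed.

Lemma dvd_aux (N : nat) (b : int) : (N%:Z %| N%:Z * b)%Z.
Proof. by apply/dvdzP; exists b; rewrite mulrC. Qed.

Lemma dvd_aux2 (N : nat) (b : int) : (N%:Z %| - (N%:Z * b))%Z.
Proof. by apply/dvdzP; exists (- b); rewrite mulNr mulrC. Qed.

Theorem proposition4p1 (R : realType) (N : nat) (hN : (1 <= N)%N) (k m : int)
  (phi : complex R -> complex R -> complex R) :
  let mN : R := m%:~R / N%:R in
  (transforms_like_Jacobi k m (Gamma0 N) phi ->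
     invariant_slash k mN (Gamma_0 N) (phi_1 N phi)
     /\ invariant_heis mN (NZxZ N) (phi_1 N phi)) /\
  (transforms_like_Jacobi k m (Gamma1 N) phi ->
     invariant_slash k mN (Gamma_1 N) (phi_1 N phi)
     /\ invariant_heis mN (NZxZ N) (phi_1 N phi)) /\
  (transforms_like_Jacobi k m (Gamma_0 N) phi ->
     invariant_slash k mN (Gamma_0 N) (phi_2 N k m phi)
     /\ invariant_heis mN (NZxZ N) (phi_2 N k m phi)) /\
  (transforms_like_Jacobi k m (Gamma_1 N) phi ->
     invariant_slash k mN (Gamma_1 N) (phi_2 N k m phi)
     /\ invariant_heis mN (NZxZ N) (phi_2 N k m phi)).
Proof.
move=> mN; split; [|split; [|split]] => -[HS HH]; split;
  try (move=> lam mu hl tau z ht; first [exact: phi1_heis | exact: phi2_heis]).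
- move=> g [hSL hc] tau z ht; apply: phi1_core => // t w ht'; apply: HS => //.
  move: hSL; rewrite /inSL2Z detE => hSL.
  split; last by case: (mk22E (ga g) (N%:Z * gb g) (gc g %/ N%:Z)%Z (gd g)) => _ -> _ _; exact: dvd_aux.
  by rewrite /inSL2Z det_mk22; apply: det_aux hSL (divzK hc).
- move=> g [hSL [hc [ha hd]]] tau z ht; apply: phi1_core => // t w ht'; apply: HS => //.
  move: hSL; rewrite /inSL2Z detE => hSL.
  rewrite /Gamma1; case: (mk22E (ga g) (N%:Z * gb g) (gc g %/ N%:Z)%Z (gd g)) => -> -> _ ->.
  split; first by rewrite /inSL2Z det_mk22; apply: det_aux hSL (divzK hc).
  by split; [exact: dvd_aux | split].
- move=> g [hSL hc] tau z ht; apply: phi2_core => // t w ht'; apply: HS => //.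
  move: hSL; rewrite /inSL2Z detE => hSL.
  split; last by case: (mk22E (gd g) (- (gc g %/ N%:Z)%Z) (- (N%:Z * gb g)) (ga g)) => _ _ -> _; exact: dvd_aux2.
  by rewrite /inSL2Z det_mk22; apply: det_aux2 hSL (divzK hc).
- move=> g [hSL [hc [ha hd]]] tau z ht; apply: phi2_core => // t w ht'; apply: HS => //.
  move: hSL; rewrite /inSL2Z detE => hSL.
  rewrite /Gamma_1; case: (mk22E (gd g) (- (gc g %/ N%:Z)%Z) (- (N%:Z * gb g)) (ga g)) => -> _ -> ->.
  split; first by rewrite /inSL2Z det_mk22; apply: det_aux2 hSL (divzK hc).
  by split; [exact: dvd_aux2 | split].
Qed.
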